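(* Consider the two-good panel bundle model with nonseparable utility described in the context, and suppose the complementarity, exclusion, stationarity and monotonicity assumptions stated there hold. Then for any $(x_s,x_t)$ and $s\ne t\le T$: (1) for each $j\in\mathcal C$: if $P_s(\{j\}\mid x_s,x_t)>P_t(\{j\}\mid x_s,x_t)$, then $(-1)^{\mathbb 1[j\in D_A]}\Delta_{s,t}\delta_A<0$ or $(-1)^{\mathbb 1[j\in D_B]}\Delta_{s,t}\delta_B<0$; (2) for each $\ell\in\{A,B\}$ with $\ell_{-1}$ the other good: if $P_s(D_\ell\mid x_s,x_t)>P_t(D_\ell\mid x_s,x_t)$, then $\Delta_{s,t}\delta_\ell>0$ or $\operatorname{sign}(\Gamma_0)\,\Delta_{s,t}\delta_{\ell_{-1}}>0$.
   Context: Panel model with two goods $A,B$, consumers $i$, periods $t=1,\dots,T$, $T\ge2$; choice set $\mathcal C=\{A,B,AB,O\}$ ($A$ = only $A$, $B$ = only $B$, $AB$ = both, $O$ = outside option). Utilities: $u_{ijt}=u(X_{ijt}'\beta_0,\alpha_{ij},\epsilon_{ijt})$ for $j\in\{A,B\}$, where $u$ is a possibly unknown, possibly nonseparable function, $X_{ijt}$ observed covariates, $\alpha_{ij}$ unobserved time-invariant fixed effects, $\epsilon_{ijt}$ unobserved shocks; $u_{iOt}=0$; $u_{iABt}=u_{iAt}+u_{iBt}+\Gamma_{it}$. $Y_{it}$ is the utility-maximizing choice; ties have probability zero. $X_{it}=(X_{iAt},X_{iBt})$, $\alpha_i=(\alpha_{iA},\alpha_{iB})$, $\epsilon_{it}=(\epsilon_{iAt},\epsilon_{iBt})$.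 Complementarity assumption: $\Gamma_{it}=\Gamma(Z_i)$ for an observed time-invariant $Z_i$; $Z_i$ is suppressed and $\Gamma_0$ denotes $\Gamma(Z_i)$. Exclusion: some component of $X_{it}$ not in $Z_i$ has nonzero coefficient. Stationarity: for all $s,t\le T$, $\epsilon_{is}\mid(X_{is},X_{it},Z_i,\alpha_i)\overset{d}{=}\epsilon_{it}\mid(X_{is},X_{it},Z_i,\alpha_i)$. Monotonicity: for every $(\alpha,\epsilon)$, $u(\tilde\delta,\alpha,\epsilon)\ge u(\delta,\alpha,\epsilon)$ whenever $\tilde\delta\ge\delta$. Notation: $P_t(K\mid x_s,x_t)=\Pr(Y_{it}\in K\mid X_{is}=x_s,X_{it}=x_t)$; $D_\ell=\{\ell,AB\}$; $\delta_{\ell t}=x_{\ell t}'\beta_0$; $\Delta_{s,t}\delta_\ell=\delta_{\ell s}-\delta_{\ell t}$; $\operatorname{sign}(x)=\mathbb 1\{x>0\}-\mathbb 1\{x<0\}$. *)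

(* Defs.v *)
From HB Require Import structures.
From mathcomp Require Import all_boot all_order all_algebra.
From mathcomp Require Import all_classical all_reals all_analysis.
Set Implicit Arguments. Unset Strict Implicit. Unset Printing Implicit Defensive.
Import Order.TTheory GRing.Theory Num.Theory.
Local Open Scope ring_scope.

Inductive good := gA | gB.
Definition other (l : good) : good := match l with gA => gB | gB => gA end.

Inductive alt := cA | cB | cAB | cO.

(* Membership in D_l = {l, AB}, as a boolean (so that 1[j \in D_l] is its nat value). *)
Definition inD (l : good) (c : alt) : bool :=
  match l, c with
  | gA, cA | gA, cAB | gB, cB | gB, cAB => true
  | _, _ => false
  end.

Definition Dset (l : good) : set alt := [set c | inD l c].

Definition util {R : numDomainType} (uA uB G : R) (c : alt) : R :=
  match c with
  | cA => uA
  | cB => uB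
  | cAB => uA + uB + G
  | cO => 0
  end.

Definition lin_index {R : numDomainType} {k : nat} (x b : 'rV[R]_k) : R :=
  \sum_(i < k) x 0 i * b 0 i.

(* Main.v *)
Require Import Defs.
From HB Require Import structures.
From mathcomp Require Import all_boot all_order all_algebra.
From mathcomp Require Import all_classical all_reals all_analysis.
From mathcomp Require Import measurable_realfun lra.
Import Order.TTheory GRing.Theory Num.Theory.
Local Open Scope classical_set_scope.
Local Open Scope ring_scope.
Lemma mset_bool d (X : measurableType d) (f : X -> bool) :
  measurable_fun setT f -> measurable [set x | f x].
Proof.
move=> mf; have := mf measurableT [set true] ltac:(by []).
by rewrite setTI; congr measurable; apply/seteqP; split => x /=; rewrite /preimage /=.
Qed.

Lemma mset_lt d (X : measurableType d) (R : realType) (f g : X -> R) :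
  measurable_fun setT f -> measurable_fun setT g -> measurable [set x | f x < g x].
Proof. by move=> mf mg; apply: mset_bool; exact: measurable_fun_ltr. Qed.

Lemma mset_eq d (X : measurableType d) (R : realType) (f g : X -> R) :
  measurable_fun setT f -> measurable_fun setT g -> measurable [set x | f x = g x].
Proof.
move=> mf mg; have := @mset_bool _ _ _ (measurable_fun_eqr mf mg).
by congr measurable; apply/seteqP; split => x /= /eqP.
Qed.

Lemma mexists_alt d (X : measurableType d) (Q : alt -> set X) :
  (forall c, measurable (Q c)) -> measurable [set x | exists c, Q c x].
Proof.
move=> mQ; have -> : [set x | exists c, Q c x] = Q cA `|` Q cB `|` Q cAB `|` Q cO.
  apply/seteqP; split => x /=.
    by move=> [[]] h; [left;left;left|left;left;right|left;right|right].
  by move=> [[[h|h]|h]|h]; eexists; exact: h.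
by repeat apply: measurableU.
Qed.

Lemma mforall_alt d (X : measurableType d) (Q : alt -> set X) :
  (forall c, measurable (Q c)) -> measurable [set x | forall c, Q c x].
Proof.
move=> mQ; have -> : [set x | forall c, Q c x] = Q cA `&` Q cB `&` Q cAB `&` Q cO.
  apply/seteqP; split => x /=.
    by move=> h; split; [split; [split|]|]; apply: h.
  by move=> [[[h1 h2] h3] h4] [].
by repeat apply: measurableI.
Qed.

Lemma mand_const d (X : measurableType d) (P : Prop) (Q : set X) :
  (P -> measurable Q) -> measurable [set x | P /\ Q x].
Proof.
case: (pselect P) => p mQ.
  have -> : [set x | P /\ Q x] = Q by apply/seteqP; split => x /=; tauto.
  exact: mQ.
have -> : [set x | P /\ Q x] = set0 by apply/seteqP; split => x /=; tauto.
exact: measurable0.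
Qed.

Lemma mimp_const d (X : measurableType d) (P : Prop) (Q : set X) :
  (P -> measurable Q) -> measurable [set x | P -> Q x].
Proof.
case: (pselect P) => p mQ.
  have -> : [set x | P -> Q x] = Q by apply/seteqP; split => x /=; tauto.
  exact: mQ.
have -> : [set x | P -> Q x] = setT by apply/seteqP; split => x /=; tauto.
exact: measurableT.
Qed.

Definition Vf {R : realType} {Ta Te : Type} (u : R -> Ta -> Te -> R) (G dA dB : R)
  (p : (Ta * Ta) * (Te * Te)) (c : alt) : R :=
  util (u dA p.1.1 p.2.1) (u dB p.1.2 p.2.2) G c.

Definition strictK {R : realType} (K : set alt) (f : alt -> R) : Prop :=
  exists c, K c /\ forall c', ~ K c' -> f c' < f c.

Lemma mVf (R : realType) (da : measure_display) (Ta : measurableType da)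
  (de : measure_display) (Te : measurableType de) (u : R -> Ta -> Te -> R) G dA dB c :
  (forall d, measurable_fun [set: Ta * Te] (fun p => u d p.1 p.2)) ->
  measurable_fun [set: (Ta * Ta) * (Te * Te)] (fun p => Vf u G dA dB p c).
Proof.
move=> hu.
have hA : measurable_fun [set: (Ta * Ta) * (Te * Te)] (fun p => u dA p.1.1 p.2.1).
  apply: (measurableT_comp (hu dA) (g := fun p : (Ta * Ta) * (Te * Te) => (p.1.1, p.2.1))).
  apply: measurable_fun_pair.
    exact: (measurableT_comp measurable_fst measurable_fst).
  exact: (measurableT_comp measurable_fst measurable_snd).
have hB : measurable_fun [set: (Ta * Ta) * (Te * Te)] (fun p => u dB p.1.2 p.2.2).
  apply: (measurableT_comp (hu dB) (g := fun p : (Ta * Ta) * (Te * Te) => (p.1.2, p.2.2))).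
  apply: measurable_fun_pair.
    exact: (measurableT_comp measurable_snd measurable_fst).
  exact: (measurableT_comp measurable_snd measurable_snd).
rewrite /Vf; case: c => /=.
- exact: hA.
- exact: hB.
- apply: measurable_funD; last exact: measurable_cst.
  exact: measurable_funD.
- exact: measurable_cst.
Qed.

Lemma mstrict (R : realType) (da : measure_display) (Ta : measurableType da)
  (de : measure_display) (Te : measurableType de) (u : R -> Ta -> Te -> R) G dA dB K :
  (forall d, measurable_fun [set: Ta * Te] (fun p => u d p.1 p.2)) ->
  measurable [set p : (Ta * Ta) * (Te * Te) | strictK K (Vf u G dA dB p)].
Proof.
move=> hu; rewrite /strictK.
apply: mexists_alt => c; apply: mand_const => _.
apply: mforall_alt => c'; apply: mimp_const => _.
by apply: mset_lt; apply: mVf.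
Qed.

Lemma core (R : realType) (da : measure_display) (Ta : measurableType da)
  (de : measure_display) (Te : measurableType de) (u : R -> Ta -> Te -> R) (G : R)
  (dO : measure_display) (Omega : measurableType dO) (P : probability Omega R)
  (alA alB : Omega -> Ta) (eAs eBs eAt eBt : Omega -> Te) (Ys Yt : Omega -> alt)
  (dAs dBs dAt dBt : R) (K : set alt) :
  (forall d, measurable_fun [set: Ta * Te] (fun p => u d p.1 p.2)) ->
  measurable_fun setT alA -> measurable_fun setT alB ->
  measurable_fun setT eAs -> measurable_fun setT eBs ->
  measurable_fun setT eAt -> measurable_fun setT eBt ->
  (forall K', measurable (Ys @^-1` K')) ->
  (forall K', measurable (Yt @^-1` K')) ->
  (forall S : set ((Ta * Ta) * (Te * Te)), measurable S ->
     P ((fun w => ((alA w, alB w), (eAs w, eBs w))) @^-1` S) =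
     P ((fun w => ((alA w, alB w), (eAt w, eBt w))) @^-1` S)) ->
  (forall w c, Vf u G dAs dBs ((alA w, alB w), (eAs w, eBs w)) c
            <= Vf u G dAs dBs ((alA w, alB w), (eAs w, eBs w)) (Ys w)) ->
  (forall w c, Vf u G dAt dBt ((alA w, alB w), (eAt w, eBt w)) c
            <= Vf u G dAt dBt ((alA w, alB w), (eAt w, eBt w)) (Yt w)) ->
  P [set w | exists c, c <> Ys w /\
       Vf u G dAs dBs ((alA w, alB w), (eAs w, eBs w)) c
       = Vf u G dAs dBs ((alA w, alB w), (eAs w, eBs w)) (Ys w)] = 0%E ->
  (forall p, strictK K (Vf u G dAs dBs p) -> strictK K (Vf u G dAt dBt p)) ->
  (P (Ys @^-1` K) <= P (Yt @^-1` K))%E.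
Proof.
move=> hu mA mB mAs mBs mAt mBt mYs mYt hst hmaxs hmaxt htie hmono.
pose oms := fun w => ((alA w, alB w), (eAs w, eBs w)).
pose omt := fun w => ((alA w, alB w), (eAt w, eBt w)).
have moms : measurable_fun setT oms.
  by apply: measurable_fun_pair; apply: measurable_fun_pair.
have momt : measurable_fun setT omt.
  by apply: measurable_fun_pair; apply: measurable_fun_pair.
pose SKs := [set p : (Ta * Ta) * (Te * Te) | strictK K (Vf u G dAs dBs p)].
pose SKt := [set p : (Ta * Ta) * (Te * Te) | strictK K (Vf u G dAt dBt p)].
have mSKs : measurable SKs by exact: mstrict.
have mpre_s : measurable (oms @^-1` SKs).
  by have := moms measurableT SKs mSKs; rewrite setTI.
have mpre_t : measurable (omt @^-1` SKs).
  by have := momt measurableT SKs mSKs; rewrite setTI.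
pose Tie := [set w | exists c, c <> Ys w /\
       Vf u G dAs dBs ((alA w, alB w), (eAs w, eBs w)) c
       = Vf u G dAs dBs ((alA w, alB w), (eAs w, eBs w)) (Ys w)].
have mTie : measurable Tie.
  have -> : Tie = [set w | exists c c', Ys w = c' /\ (c <> c' /\
       Vf u G dAs dBs (oms w) c = Vf u G dAs dBs (oms w) c')].
    apply/seteqP; split => w /=.
      by move=> [c [h1 h2]]; exists c, (Ys w).
    by move=> [c [c' [<- h]]]; exists c.
  pose E c c' := [set w | c <> c' /\
       Vf u G dAs dBs (oms w) c = Vf u G dAs dBs (oms w) c'].
  apply: (@mexists_alt _ _ (fun c => [set w | exists c', (Ys @^-1` [set c'] `&` E c c') w])) => c.
  apply: (@mexists_alt _ _ (fun c' => Ys @^-1` [set c'] `&` E c c')) => c'.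
  apply: measurableI; first exact: mYs.
  apply: mand_const => _.
  apply: mset_eq.
    exact: (measurableT_comp (@mVf _ _ _ _ _ u G dAs dBs c hu) moms).
  exact: (measurableT_comp (@mVf _ _ _ _ _ u G dAs dBs c' hu) moms).
have sub1 : Ys @^-1` K `<=` oms @^-1` SKs `|` Tie.
  move=> w /= Kw; case: (pselect (Tie w)) => hT; [by right|left].
  exists (Ys w); split => // c' nKc'.
  have hle := hmaxs w c'.
  rewrite lt_neqAle hle andbT; apply/eqP => heq; apply: hT.
  by exists c'; split => // ec; apply: nKc'; rewrite ec.
have sub2 : omt @^-1` SKs `<=` Yt @^-1` K.
  move=> w /= /hmono [c [Kc hc]]; apply: contrapT => nK.
  have := hc _ nK; have := hmaxt w c.
  rewrite /omt => h1 h2.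
  by have := lt_le_trans h2 h1; rewrite ltxx.
apply: (le_trans (le_measure _ _ _ sub1)); rewrite ?inE //.
  by apply: measurableU.
have h2 : (P (oms @^-1` SKs `|` Tie) <= P (oms @^-1` SKs))%E.
  have z : P Tie = 0%E := htie.
  move: z => /eqP; rewrite eq_le => /andP[z _].
  apply: (le_trans (measureU2 P mpre_s mTie)).
  rewrite -[leRHS]adde0; apply: leeD; first exact: lexx.
  exact: z.
apply: (le_trans h2).
rewrite (hst _ mSKs).
by apply: le_measure; rewrite ?inE.
Qed.

Definition condj {R : realType} (a1 b1 a2 b2 : R) (j : alt) : Prop :=
  match j with
  | cA => a1 <= a2 /\ b2 <= b1
  | cB => b1 <= b2 /\ a2 <= a1
  | cAB => a1 <= a2 /\ b1 <= b2
  | cO => a2 <= a1 /\ b2 <= b1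
  end.

Lemma mono_single (R : realType) (G a1 b1 a2 b2 : R) (j : alt) :
  condj a1 b1 a2 b2 j ->
  strictK [set j] (util a1 b1 G) -> strictK [set j] (util a2 b2 G).
Proof.
move=> hc [c [Kc H]]; rewrite /= in Kc; subst c.
exists j; split => // c' nc'; have := H c' nc'.
by case: j hc H nc' => /= -[h1 h2] _; case: c' => /= nc' h;
  try (exfalso; exact: (nc' erefl)); lra.
Qed.

Lemma mono_DA (R : realType) (G a1 b1 a2 b2 : R) :
  a1 <= a2 -> (0 < G -> b1 <= b2) -> (G < 0 -> b2 <= b1) ->
  strictK (Dset gA) (util a1 b1 G) -> strictK (Dset gA) (util a2 b2 G).
Proof.
move=> h1 h2 h3 [c [Kc H]].
have HB := H cB ltac:(by []); have HO := H cO ltac:(by []).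
have hs : (b1 < a1 /\ 0 < a1) \/ (b1 < a1 + b1 + G /\ 0 < a1 + b1 + G).
  by case: c Kc H HB HO => //= _ _ hb ho; [left|right]; split.
have [hA|hA] := boolP ((b2 < a2) && (0 < a2)).
  move/andP: hA => [hA1 hA2].
  exists cA; split => //; case => /= nd; try (exfalso; exact: nd); lra.
have hn : a2 <= b2 \/ a2 <= 0.
  by move: hA; rewrite negb_and -!leNgt => /orP[]; [left|right].
exists cAB; split => //.
have [g|g|g] := ltgtP G 0.
- have hg := h3 g; case => /= nd; try (exfalso; exact: nd); case: hs => -[? ?]; case: hn => ?; lra.
- have hg := h2 g; case => /= nd; try (exfalso; exact: nd); case: hs => -[? ?]; case: hn => ?; lra.
- case => /= nd; try (exfalso; exact: nd); case: hs => -[? ?]; case: hn => ?; lra.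
Qed.

Lemma mono_DB (R : realType) (G a1 b1 a2 b2 : R) :
  b1 <= b2 -> (0 < G -> a1 <= a2) -> (G < 0 -> a2 <= a1) ->
  strictK (Dset gB) (util a1 b1 G) -> strictK (Dset gB) (util a2 b2 G).
Proof.
move=> h1 h2 h3 [c [Kc H]].
have HA := H cA ltac:(by []); have HO := H cO ltac:(by []).
have hs : (a1 < b1 /\ 0 < b1) \/ (a1 < a1 + b1 + G /\ 0 < a1 + b1 + G).
  by case: c Kc H HA HO => //= _ _ hb ho; [left|right]; split.
have [hA|hA] := boolP ((a2 < b2) && (0 < b2)).
  move/andP: hA => [hA1 hA2].
  exists cB; split => //; case => /= nd; try (exfalso; exact: nd); lra.
have hn : b2 <= a2 \/ b2 <= 0.
  by move: hA; rewrite negb_and -!leNgt => /orP[]; [left|right].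
exists cAB; split => //.
have [g|g|g] := ltgtP G 0.
- have hg := h3 g; case => /= nd; try (exfalso; exact: nd); case: hs => -[? ?]; case: hn => ?; lra.
- have hg := h2 g; case => /= nd; try (exfalso; exact: nd); case: hs => -[? ?]; case: hn => ?; lra.
- case => /= nd; try (exfalso; exact: nd); case: hs => -[? ?]; case: hn => ?; lra.
Qed.

Theorem proposition6
  (R : realType) (k : nat) (beta0 : 'rV[R]_k)
  (Tz : Type) (Gam : Tz -> R) (z : Tz)
  (da : measure_display) (Ta : measurableType da)
  (de : measure_display) (Te : measurableType de)
  (u : R -> Ta -> Te -> R)
  (T s t : nat) (x : nat -> good -> 'rV[R]_k)
  (dO : measure_display) (Omega : measurableType dO) (P : probability Omega R)
  (alA alB : Omega -> Ta) (epsA epsB : nat -> Omega -> Te)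
  (Y : nat -> Omega -> alt) :
  (2 <= T)%N -> (1 <= s <= T)%N -> (1 <= t <= T)%N -> s != t ->
  (* exclusion *)
  (exists c : 'I_k, beta0 0 c != 0) ->
  (* monotonicity *)
  (forall a e d1 d2, d1 <= d2 -> u d1 a e <= u d2 a e) ->
  (* regularity (measurability) *)
  (forall d, measurable_fun [set: Ta * Te] (fun p => u d p.1 p.2)) ->
  measurable_fun [set: Omega] alA -> measurable_fun [set: Omega] alB ->
  (forall tau, measurable_fun [set: Omega] (epsA tau)) ->
  (forall tau, measurable_fun [set: Omega] (epsB tau)) ->
  (forall tau (K : set alt), tau = s \/ tau = t -> measurable (Y tau @^-1` K)) ->
  (* stationarity: (alpha, eps_s) and (alpha, eps_t) have the same conditional law *)
  (forall S : set ((Ta * Ta) * (Te * Te)), measurable S ->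
     P ((fun w => ((alA w, alB w), (epsA s w, epsB s w))) @^-1` S) =
     P ((fun w => ((alA w, alB w), (epsA t w, epsB t w))) @^-1` S)) ->
  (* Y_tau is a utility-maximizing choice *)
  (forall tau, tau = s \/ tau = t -> forall w c,
     util (u (lin_index (x tau gA) beta0) (alA w) (epsA tau w))
          (u (lin_index (x tau gB) beta0) (alB w) (epsB tau w)) (Gam z) c
     <= util (u (lin_index (x tau gA) beta0) (alA w) (epsA tau w))
             (u (lin_index (x tau gB) beta0) (alB w) (epsB tau w)) (Gam z) (Y tau w)) ->
  (* ties have probability zero *)
  (forall tau, tau = s \/ tau = t ->
     P [set w | exists c, c <> Y tau w /\
        util (u (lin_index (x tau gA) beta0) (alA w) (epsA tau w))
             (u (lin_index (x tau gB) beta0) (alB w) (epsB tau w)) (Gam z) c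
        = util (u (lin_index (x tau gA) beta0) (alA w) (epsA tau w))
               (u (lin_index (x tau gB) beta0) (alB w) (epsB tau w)) (Gam z) (Y tau w)]
     = 0%E) ->
  (* (1) *)
  (forall j : alt,
     (P (Y t @^-1` [set j]) < P (Y s @^-1` [set j]))%E ->
     (-1) ^+ inD gA j * (lin_index (x s gA) beta0 - lin_index (x t gA) beta0) < 0
     \/ (-1) ^+ inD gB j * (lin_index (x s gB) beta0 - lin_index (x t gB) beta0) < 0)
  /\
  (* (2) *)
  (forall l : good,
     (P (Y t @^-1` Dset l) < P (Y s @^-1` Dset l))%E ->
     0 < lin_index (x s l) beta0 - lin_index (x t l) beta0
     \/ 0 < Num.sg (Gam z) *
            (lin_index (x s (other l)) beta0 - lin_index (x t (other l)) beta0)).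
Proof.
move=> _ _ _ _ _ hmono hu hA hB hEA hEB hY hstat hmax htie.
have key : forall K : set alt,
  (forall p, strictK K (Vf u (Gam z) (lin_index (x s gA) beta0) (lin_index (x s gB) beta0) p) ->
             strictK K (Vf u (Gam z) (lin_index (x t gA) beta0) (lin_index (x t gB) beta0) p)) ->
  (P (Y s @^-1` K) <= P (Y t @^-1` K))%E.
  move=> K hm.
  exact: (@core R da Ta de Te u (Gam z) dO Omega P alA alB (epsA s) (epsB s) (epsA t) (epsB t)
    (Y s) (Y t) _ _ _ _ K hu hA hB (hEA s) (hEB s) (hEA t) (hEB t)
    (fun K' => hY s K' (or_introl erefl)) (fun K' => hY t K' (or_intror erefl)) hstat
    (hmax s (or_introl erefl)) (hmax t (or_intror erefl)) (htie s (or_introl erefl)) hm).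
split.
- move=> j hlt; apply: contrapT => hn.
  have hle : (P (Y s @^-1` [set j]) <= P (Y t @^-1` [set j]))%E.
    apply: key => p; apply: mono_single.
    case: j hlt hn => _ hn /=; rewrite ?expr1 ?expr0 ?mulN1r ?mul1r in hn;
      split; apply: hmono; rewrite leNgt; apply/negP => h; apply: hn;
      first [left; lra | right; lra].
  by have := lt_le_trans hlt hle; rewrite ltxx.
- move=> l hlt; apply: contrapT => hn.
  have hle : (P (Y s @^-1` Dset l) <= P (Y t @^-1` Dset l))%E.
    apply: key => p; case: l hlt hn => _ hn /=.
    + apply: mono_DA.
      * apply: hmono; rewrite leNgt; apply/negP => h; apply: hn; left; lra.
      * move=> g; apply: hmono; rewrite leNgt; apply/negP => h; apply: hn; right.
        rewrite gtr0_sg // mul1r; lra.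
      * move=> g; apply: hmono; rewrite leNgt; apply/negP => h; apply: hn; right.
        rewrite ltr0_sg // mulN1r; lra.
    + apply: mono_DB.
      * apply: hmono; rewrite leNgt; apply/negP => h; apply: hn; left; lra.
      * move=> g; apply: hmono; rewrite leNgt; apply/negP => h; apply: hn; right.
        rewrite gtr0_sg // mul1r; lra.
      * move=> g; apply: hmono; rewrite leNgt; apply/negP => h; apply: hn; right.
        rewrite ltr0_sg // mulN1r; lra.
  by have := lt_le_trans hlt hle; rewrite ltxx.
Qed.
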